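(* Let $n\ge 2$, $t\ge 2$, let $V$ be a $2n$-dimensional $\mathbb{F}_{q^t}$-vector space with $V=U_1\oplus U_2$, $\dim U_1=\dim U_2=n$, and put $T_1=PG(U_1,\mathbb{F}_{q^t})$, $T_2=PG(U_2,\mathbb{F}_{q^t})$ (two disjoint $(n-1)$-dimensional subspaces of $\Lambda=PG(V,\mathbb{F}_{q^t})=PG(2n-1,q^t)$). Let $f:U_1\to U_2$ be an invertible semilinear map with companion automorphism $\sigma\in\mathrm{Aut}(\mathbb{F}_{q^t})$ such that $\mathrm{Fix}(\sigma)=\mathbb{F}_q$, and let $\Phi_f:T_1\to T_2$ be the induced collineation, $\langle\mathbf u\rangle_{q^t}\mapsto\langle f(\mathbf u)\rangle_{q^t}$. Then for every $\rho\in\mathbb{F}_{q^t}^*$ the set $$L_{\rho,f}=\{\langle \mathbf u+\rho f(\mathbf u)\rangle_{q^t}:\mathbf u\in U_1\setminus\{\mathbf 0\}\},$$ which is the $\mathbb{F}_q$-linear set defined by the $\mathbb{F}_q$-subspace $W_{\rho,f}=\{\mathbf u+\rho f(\mathbf u):\mathbf u\in U_1\}$ (of $\mathbb{F}_q$-dimension $tn$), is an $\mathbb{F}_q$-linear set of $\Lambda$ of pseudoregulus type, whose associated pseudoregulus is $\{\langle P,P^{\Phi_f}\rangle_{q^t}:P\in T_1\}$ and whose transversal spaces are $T_1$ and $T_2$.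
   Context: A map $f:U_1\to U_2$ between $\mathbb{F}_{q^t}$-spaces is semilinear with companion automorphism $\sigma$ if it is additive and $f(\lambda\mathbf u)=\lambda^\sigma f(\mathbf u)$ for all $\lambda\in\mathbb{F}_{q^t}$. For an $\mathbb{F}_q$-subspace $U$ of $V$, $L_U=\{\langle \mathbf u\rangle_{q^t}:\mathbf u\in U\setminus\{\mathbf 0\}\}$ is the $\mathbb{F}_q$-linear set defined by $U$, of rank $\dim_{\mathbb{F}_q}U$; the weight of a subspace $PG(W,\mathbb{F}_{q^t})$ in $L_U$ is $\dim_{\mathbb{F}_q}(W\cap U)$; $L_U$ is scattered if every point has weight 1. Definition (pseudoregulus type): for integers $t,n\ge 2$, a scattered $\mathbb{F}_q$-linear set $L=L_U$ of $\Lambda=PG(2n-1,q^t)$ of rank $tn$ is of pseudoregulus type if (i) there exist $m=(q^{nt}-1)/(q^t-1)$ pairwise disjoint lines $s_1,\dots,s_m$ of $\Lambda$ each having weight $t$ in $L$, and (ii) there exist exactly two $(n-1)$-dimensional subspaces $T_1,T_2$ of $\Lambda$ disjoint from $L$ such that $T_j\cap s_i\neq\emptyset$ for all $i,j$. The set $\{s_1,\dots,s_m\}$ is called the pseudoregulus associated with $L$, and $T_1,T_2$ its transversal spaces. *)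

(* Defs.v *)
From HB Require Import structures.
From mathcomp Require Import all_boot all_order all_algebra all_field.
Unset Printing Implicit Defensive.
Import GRing.Theory.
Local Open Scope ring_scope.

Section Defs.
Context {L : finFieldType} {N : nat}.
Local Notation V := 'rV[L]_N.

Definition Fq (q : nat) : {set L} := [set x : L | x ^+ q == x].

Definition Fq_comb (q : nat) (s : seq V) (v : V) : Prop :=
  exists c : seq L, [/\ size c = size s, all (fun x => x \in Fq q) c &
    v = \sum_(i < size s) c`_i *: s`_i].

Definition Fq_free (q : nat) (s : seq V) : Prop :=
  forall c : seq L, size c = size s -> all (fun x => x \in Fq q) c ->
    \sum_(i < size s) c`_i *: s`_i = 0 -> forall i, c`_i = 0.

Definition Fq_dim (q : nat) (S : {set V}) (d : nat) : Prop :=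
  exists s : seq V, [/\ size s = d, all (fun v => v \in S) s, Fq_free q s &
    forall v, v \in S <-> Fq_comb q s v].

Definition vset (W : {vspace V}) : {set V} := [set v : V | v \in W].

Definition weight (q : nat) (U : {set V}) (W : {vspace V}) (w : nat) : Prop :=
  Fq_dim q (U :&: vset W) w.

Definition scattered (q : nat) (U : {set V}) : Prop :=
  forall u, u \in U -> u != 0 -> weight q U <[u]>%VS 1.

Definition disjoint_from_LU (U : {set V}) (T : {vspace V}) : Prop :=
  forall u, u \in U -> u != 0 -> ~~ (<[u]> <= T)%VS.

Definition pr_size (q t n : nat) : nat := ((q ^ (n * t) - 1) %/ (q ^ t - 1))%N.

Definition is_pseudoregulus (q t n : nat) (U : {set V})
    (s : 'I_(pr_size q t n) -> {vspace V}) (T1 T2 : {vspace V}) : Prop :=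
  [/\ forall i, \dim (s i) = 2%N,
      forall i j, i != j -> (s i :&: s j)%VS = 0%VS,
      forall i, weight q U (s i) t,
      T1 != T2 &
      forall T : {vspace V},
        (\dim T = n /\ disjoint_from_LU U T /\ forall i, (T :&: s i)%VS != 0%VS)
        <-> (T = T1 \/ T = T2)].

Definition pseudoregulus_type (q t n : nat) (U : {set V}) : Prop :=
  [/\ Fq_dim q U (t * n)%N, scattered q U &
      exists s T1 T2, is_pseudoregulus q t n U s T1 T2].

End Defs.

(* Main.v *)
Require Import Defs.
From HB Require Import structures.
From mathcomp Require Import all_boot all_order all_algebra all_field.
From Stdlib Require Import Classical.
Import GRing.Theory.
Local Open Scope ring_scope.

Lemma card_fixq (L : finFieldType) (q t : nat) :
  #|L| = (q ^ t)%N -> (0 < t)%N -> (1 < q)%N ->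
  #|[set x : L | x ^+ q == x]| = q.
Proof.
move=> HL t0 q1.
pose P : {poly L} := 'X^q - 'X.
have dv : P %| \prod_(x <- enum L) ('X - x%:P).
  rewrite big_enum /= -finField_genPoly HL.
  have E1 : P = ('X^(q.-1) - 1) * 'X.
    by rewrite /P mulrBl mul1r -exprSr prednK // ltnW.
  have E2 : ('X^(q ^ t)%N - 'X : {poly L}) = (('X^(q.-1)) ^+ (\sum_(i < t) q ^ i) - 1) * 'X.
    rewrite mulrBl mul1r -exprM -predn_exp -exprSr prednK //.
    by rewrite expn_gt0 ltnW.
  by rewrite E2 E1 (subrX1 ('X^(q.-1))) mulrAC dvdp_mulIl.
have [m Hm] := dvdp_prod_XsubC dv.
have Hs : size P = q.+1.
  rewrite /P size_polyDl size_polyXn // size_polyN size_polyX ltnS //.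
have Hsz : size (mask m (enum L)) = q.
  by have := eqp_size Hm; rewrite Hs size_prod_XsubC => -[].
rewrite -{2}Hsz -(card_uniqP (mask_uniq (enum_uniq L) m)).
apply: eq_card => x; rewrite inE.
rewrite -root_prod_XsubC -(eqp_root Hm) /root /P !hornerE subr_eq0.
by [].
Qed.

Section FBasisL.
Variables (L : finFieldType) (sigma : {rmorphism L -> L}).
Definition inF (x : L) := sigma x == x.

Lemma inF0 : inF 0. Proof. by rewrite /inF rmorph0. Qed.
Lemma inF1 : inF 1. Proof. by rewrite /inF rmorph1. Qed.
Lemma inFD x y : inF x -> inF y -> inF (x + y).
Proof. by rewrite /inF rmorphD => /eqP-> /eqP->. Qed.
Lemma inFN x : inF x -> inF (- x).
Proof. by rewrite /inF rmorphN => /eqP->. Qed.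
Lemma inFM x y : inF x -> inF y -> inF (x * y).
Proof. by rewrite /inF rmorphM => /eqP-> /eqP->. Qed.
Lemma inFV x : inF x -> inF x^-1.
Proof. by rewrite /inF fmorphV => /eqP->. Qed.

Definition combL (b : seq L) x := exists c : nat -> L,
  (forall i, inF (c i)) /\ x = \sum_(i < size b) c i * b`_i.
Definition freeL (b : seq L) := forall c : nat -> L, (forall i, inF (c i)) ->
  \sum_(i < size b) c i * b`_i = 0 -> forall i, (i < size b)%N -> c i = 0.

Lemma freeL_cons b v : freeL b -> ~ combL b v -> freeL (v :: b).
Proof.
move=> fb ncb c Hc; rewrite big_ord_recl => Hs.
have [c0|c0] := eqVneq (c 0%N) 0.
  rewrite c0 mul0r add0r in Hs.
  have Hs' : \sum_(i < size b) c i.+1 * b`_i = 0.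
    by rewrite -[RHS]Hs; apply: eq_bigr => i _; rewrite lift0.
  move=> [|i] //= Hi; exact: (fb (fun i => c i.+1)).
exfalso; apply: ncb.
exists (fun i => - c i.+1 / c 0%N); split.
  move=> i; apply: inFM; [apply: inFN | apply: inFV]; apply: Hc.
apply: (mulfI c0); rewrite mulr_sumr.
have -> : c 0%N * v = - \sum_(i < size b) c (lift ord0 i) * b`_i.
  by apply/eqP; rewrite -addr_eq0 Hs.
rewrite -sumrN; apply: eq_bigr => i _; rewrite lift0 /=.
by rewrite mulrA mulrCA divff // mulr1 mulNr.
Qed.

Lemma freeL_uniq b : freeL b -> uniq b.
Proof.
move=> fb; apply/negbNE/negP => /(uniqPn 0) [i [j [ij jb eq]]].
have ib : (i < size b)%N by apply: ltn_trans jb.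
pose c k : L := if k == i then 1 else if k == j then -1 else 0.
have Hc : forall k, inF (c k).
  move=> k; rewrite /c; case: ifP => _; first exact: inF1.
  by case: ifP => _; [apply: inFN; apply: inF1 | apply: inF0].
suff Hs : \sum_(k < size b) c k * b`_k = 0.
  by have := fb c Hc Hs i ib; rewrite /c eqxx => /eqP; rewrite oner_eq0.
rewrite (bigD1 (Ordinal ib)) //= (bigD1 (Ordinal jb)) /=; last first.
  by apply/eqP => -[] /eqP; rewrite gtn_eqF.
rewrite big1 ?addr0; last first.
  move=> k /andP [ki kj]; rewrite /c.
  have -> : (k == i :> nat) = false by apply/negbTE; apply: contra ki => /eqP ki; apply/eqP/val_inj.
  have -> : (k == j :> nat) = false by apply/negbTE; apply: contra kj => /eqP kj; apply/eqP/val_inj.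
  by rewrite mul0r.
by rewrite /c eqxx (gtn_eqF ij) eqxx eq mul1r mulN1r subrr.
Qed.

Lemma exists_basisL : exists b, freeL b /\ forall x, combL b x.
Proof.
suff : forall k b, freeL b -> (#|L| < size b + k)%N ->
    exists b, freeL b /\ forall x, combL b x.
  move=> /(_ #|L|.+1 [::]); apply => //; by move=> c _ _ [].
elim=> [|k IH] b fb.
  rewrite addn0 => lt; exfalso.
  have le : (size b <= #|L|)%N by rewrite -(card_uniqP (@freeL_uniq b fb)) max_card.
  by have := leq_trans lt le; rewrite ltnn.
move=> lt; case: (classic (forall x, combL b x)) => [H|]; first by exists b.
move=> /not_all_ex_not [v nv]; apply: (IH (v :: b)); first exact: freeL_cons.
by rewrite /= addSnnS.
Qed.

Lemma card_basisL b : freeL b -> (forall x, combL b x) ->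
  #|L| = (#|[pred x : L | inF x]| ^ size b)%N.
Proof.
move=> fb cb.
pose FT := {x : L | inF x}.
pose phi (c : {ffun 'I_(size b) -> FT}) : L := \sum_(i < size b) val (c i) * b`_i.
have phi_inj : injective phi.
  move=> c1 c2 E.
  pose g n : L := if insub n is Some i then val (c1 i) - val (c2 i) else 0.
  have Hg : forall n, inF (g n).
    move=> n; rewrite /g; case: insub => [i|]; last exact: inF0.
    by apply: inFD; [exact: valP | apply: inFN; exact: valP].
  have Hs : \sum_(i < size b) g i * b`_i = 0.
    rewrite /g; under eq_bigr => i _ do rewrite valK mulrBl.
    by rewrite sumrB -/(phi c1) E subrr.
  apply/ffunP => i; apply: val_inj; apply/eqP; rewrite -subr_eq0; apply/eqP.
  by have := fb g Hg Hs i (ltn_ord i); rewrite /g valK.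
have E : [set: L] = phi @: [set: {ffun 'I_(size b) -> FT}].
  apply/setP => x; rewrite !inE; symmetry; apply/imsetP.
  have [c [Hc ->]] := cb x.
  exists [ffun i : 'I_(size b) => (Sub (c i) (Hc i) : FT)] => //.
  by rewrite /phi; apply: eq_bigr => i _; rewrite ffunE.
by rewrite -cardsT E (card_imset _ phi_inj) cardsT card_ffun card_sig card_ord.
Qed.

End FBasisL.

Section FBasisV.
Variables (L : finFieldType) (sigma : {rmorphism L -> L}) (V : vectType L).
Local Notation inF := (@inF L sigma).

Definition combV (s : seq V) v := exists c : nat -> L,
  (forall i, inF (c i)) /\ v = \sum_(i < size s) c i *: s`_i.
Definition freeV (s : seq V) := forall c : nat -> L, (forall i, inF (c i)) ->
  \sum_(i < size s) c i *: s`_i = 0 -> forall i, (i < size s)%N -> c i = 0.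
Definition basisV (s : seq V) (S : V -> Prop) := freeV s /\ forall v, S v <-> combV s v.

Lemma combV_nth s i : (i < size s)%N -> combV s s`_i.
Proof.
move=> iS; exists (fun k => (k == i)%:R); split.
  by move=> k; case: (k == i); [exact: (@inF1 L sigma) | exact: (@inF0 L sigma)].
rewrite (bigD1 (Ordinal iS)) //= eqxx scale1r big1 ?addr0 //.
move=> k ki; have -> : (k == i :> nat) = false.
  by apply/negbTE; apply: contra ki => /eqP ki; apply/eqP/val_inj.
by rewrite scale0r.
Qed.

Lemma basisV_mem s S i : basisV s S -> (i < size s)%N -> S s`_i.
Proof. by move=> [_ H] iS; apply/H/combV_nth. Qed.

Lemma basisV_line b x : @freeL L sigma b -> (forall y, @combL L sigma b y) -> x != 0 ->
  basisV (map (fun c => c *: x) b) (fun v => v \in <[x]>%VS).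
Proof.
move=> fb cb x0; split.
  move=> c Hc; rewrite size_map => Hs i ib.
  apply: (fb c Hc) => //.
  have : (\sum_(i < size b) c i * b`_i) *: x = 0.
    rewrite scaler_suml -[RHS]Hs; apply: eq_bigr => k _.
    by rewrite (nth_map 0) // scalerA.
  by move/eqP; rewrite scaler_eq0 (negbTE x0) orbF => /eqP.
move=> v; split.
  move=> /vlineP [k ->]; have [c [Hc ->]] := cb k; exists c; split => //.
  rewrite size_map scaler_suml; apply: eq_bigr => i _.
  by rewrite (nth_map 0) // scalerA.
move=> [c [Hc ->]]; apply: memv_suml => i _; rewrite size_map in i *.
by rewrite (nth_map 0) // memvZ // memvZ // memv_line.
Qed.

Lemma sum_cat (s1 s2 : seq V) (c : nat -> L) :
  \sum_(i < size (s1 ++ s2)) c i *: (s1 ++ s2)`_i =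
  \sum_(i < size s1) c i *: s1`_i + \sum_(i < size s2) c (size s1 + i)%N *: s2`_i.
Proof.
rewrite size_cat big_split_ord; congr (_ + _); apply: eq_bigr => i _.
  by rewrite nth_cat /= ltn_ord.
by rewrite nth_cat /= ltnNge leq_addr /= addKn.
Qed.

Lemma combV_mem s (U : {vspace V}) v : (forall i, (i < size s)%N -> s`_i \in U) ->
  combV s v -> v \in U.
Proof.
move=> Hs [c [Hc ->]]; apply: memv_suml => i _; apply: memvZ; exact: Hs.
Qed.

Lemma decompV (U1 U2 : {vspace V}) a1 a2 b1 b2 : directv (U1 + U2) ->
  a1 \in U1 -> b1 \in U1 -> a2 \in U2 -> b2 \in U2 -> a1 + a2 = b1 + b2 ->
  a1 = b1 /\ a2 = b2.
Proof.
move=> /directv_addP dU a1U b1U a2U b2U E.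
have H : a1 - b1 \in (U1 :&: U2)%VS.
  rewrite memv_cap; apply/andP; split; first exact: memvB.
  have -> : a1 - b1 = b2 - a2.
    by rewrite -[a1](addrK a2) E addrAC [b1 + b2]addrC addrK.
  exact: memvB.
rewrite dU memv0 subr_eq0 in H; move/eqP: H => H; split => //.
by move: E; rewrite H => /addrI.
Qed.
Arguments decompV {U1 U2 a1 a2 b1 b2}.

Lemma basisV_cat s1 s2 (U1 U2 : {vspace V}) :
  basisV s1 (fun v => v \in U1) -> basisV s2 (fun v => v \in U2) ->
  directv (U1 + U2) -> basisV (s1 ++ s2) (fun v => v \in (U1 + U2)%VS).
Proof.
move=> [f1 c1] [f2 c2] dU.
have m1 : forall c : nat -> L, (forall i, inF (c i)) ->
    \sum_(i < size s1) c i *: s1`_i \in U1.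
  by move=> c Hc; apply/c1; exists c.
have m2 : forall c : nat -> L, (forall i, inF (c i)) ->
    \sum_(i < size s2) c i *: s2`_i \in U2.
  by move=> c Hc; apply/c2; exists c.
split.
  move=> c Hc; rewrite sum_cat => Hs.
  have Hc' : forall i, inF (c (size s1 + i)%N) by move=> i; apply: Hc.
  have [E1 E2] := decompV dU (m1 c Hc) (mem0v U1) (m2 _ Hc') (mem0v U2)
    (etrans Hs (esym (addr0 0))).
  move=> i; rewrite size_cat => ib.
  case: (ltnP i (size s1)) => il; first exact: (f1 c Hc E1).
  rewrite -(subnKC il); apply: (f2 _ Hc' E2).
  by rewrite -(ltn_add2l (size s1)) subnKC.
move=> v; split.
  move=> /memv_addP [a aU [b bU ->]].
  have [ca [Hca ->]] := (c1 a).1 aU.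
  have [cb [Hcb ->]] := (c2 b).1 bU.
  pose c n := if (n < size s1)%N then ca n else cb (n - size s1)%N.
  exists c; split.
    by move=> n; rewrite /c; case: ifP.
  rewrite (sum_cat _ _ c); congr (_ + _); apply: eq_bigr => i _; rewrite /c.
    by rewrite ltn_ord.
  by rewrite ltnNge leq_addr /= addKn.
move=> [c [Hc ->]]; rewrite sum_cat; apply: memv_add; first exact: m1.
by apply: (m2 (fun i => c (size s1 + i)%N)) => i; apply: Hc.
Qed.

Lemma size_flat (b : seq L) (X : seq V) :
  size (flatten [seq [seq c *: x | c <- b] | x <- X]) = (size b * size X)%N.
Proof. by elim: X => [|x X IH] /=; rewrite ?muln0 // size_cat size_map IH mulnS. Qed.

Lemma basisV_span b X : @freeL L sigma b -> (forall y, @combL L sigma b y) -> free X ->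
  basisV (flatten [seq [seq c *: x | c <- b] | x <- X]) (fun v => v \in <<X>>%VS).
Proof.
move=> fb cb; elim: X => [|x X IH].
  move=> _; rewrite span_nil; split; first by move=> c _ _ i.
  move=> v; rewrite memv0; split.
    by move/eqP->; exists (fun _ => 0); split; [move=> i; exact: (@inF0 L sigma) | by rewrite big_ord0].
  by move=> [c [_ ->]]; rewrite big_ord0.
rewrite free_cons => /andP [xX fX].
have x0 : x != 0 by apply: contraNneq xX => ->; rewrite mem0v.
have -> : flatten [seq [seq c *: x0 | c <- b] | x0 <- x :: X] =
  [seq c *: x | c <- b] ++ flatten [seq [seq c *: x0 | c <- b] | x0 <- X] by [].
rewrite span_cons; apply: basisV_cat; [exact: basisV_line | exact: IH |].
apply/directv_addP/eqP; rewrite -subv0; apply/subvP => y /memv_capP [/vlineP [k ->] ky].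
rewrite memv0; have [->|k0] := eqVneq k 0; first by rewrite scale0r.
exfalso; move/negP: xX; apply; have -> : x = k^-1 *: (k *: x) by rewrite scalerA mulVf // scale1r.
exact: memvZ.
Qed.

Lemma basisV_image s (U : {vspace V}) (phi : V -> V) :
  {in U &, forall x y, phi (x + y) = phi x + phi y} ->
  (forall c x, inF c -> x \in U -> phi (c *: x) = c *: phi x) ->
  {in U &, injective phi} ->
  basisV s (fun v => v \in U) ->
  basisV (map phi s) (fun y => exists2 x, x \in U & y = phi x).
Proof.
move=> phiD phiZ phiI [fs cs].
have sU : forall i, (i < size s)%N -> s`_i \in U by move=> i iS; apply/cs/combV_nth.
have phi0 : phi 0 = 0.
  by have := phiD 0 0 (mem0v U) (mem0v U); rewrite addr0 => H; apply: (addrI (phi 0)); rewrite addr0 -H.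
have phiS : forall c, (forall i, inF (c i)) ->
    phi (\sum_(i < size s) c i *: s`_i) = \sum_(i < size s) c i *: phi s`_i /\
    \sum_(i < size s) c i *: s`_i \in U.
  move=> c Hc.
  apply: (big_ind2 (fun a b => phi a = b /\ a \in U)).
  - by rewrite phi0 mem0v.
  - by move=> a1 b1 a2 b2 [<- H1] [<- H2]; split; [rewrite phiD | apply: memvD].
  - move=> i _; split; first by rewrite phiZ // sU.
    by apply: memvZ; rewrite sU.
split.
  move=> c Hc; rewrite size_map => Hs.
  have [E1 E2] := phiS c Hc.
  apply: (fs c Hc); apply: phiI => //; first exact: mem0v.
  rewrite E1 phi0 -[RHS]Hs; apply: eq_bigr => i _; rewrite (nth_map 0) //.
move=> y; split.
  move=> [x xU ->]; have [c [Hc ->]] := (cs x).1 xU; exists c; split => //.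
  rewrite size_map (phiS c Hc).1; apply: eq_bigr => i _; rewrite (nth_map 0) //.
move=> [c [Hc ->]]; exists (\sum_(i < size s) c i *: s`_i); first exact: (phiS c Hc).2.
rewrite (phiS c Hc).1 size_map; apply: eq_bigr => i _; rewrite (nth_map 0) //.
Qed.

End FBasisV.

Lemma basisV_Fq_dim (L : finFieldType) (sigma : {rmorphism L -> L}) (q N : nat)
  (s : seq 'rV[L]_N) (S : {set 'rV[L]_N}) :
  [set x | sigma x == x] = Fq q -> @basisV L sigma _ s (fun v => v \in S) ->
  Fq_dim q S (size s).
Proof.
move=> Hfix [fs cs].
have hF : forall x, @inF L sigma x = (x \in Fq q) by move=> x; rewrite -Hfix inE.
have hc : forall c : seq L, all (fun x => x \in Fq q) c -> forall i, @inF L sigma c`_i.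
  move=> c /allP Hc i; case: (ltnP i (size c)) => ic.
    by rewrite hF; apply: Hc; rewrite mem_nth.
  by rewrite nth_default //; exact: inF0.
exists s; split => //.
- by apply/allP => v /(nthP 0) [i iS <-]; exact: (@basisV_mem L sigma _ s (fun v => v \in S) i (conj fs cs) iS).
- move=> c sc ac Hs i; case: (ltnP i (size s)) => iS.
    exact: (fs (fun i => c`_i) (hc c ac) Hs).
  by rewrite nth_default // sc.
- move=> v; split.
    move/cs => [c [Hc ->]]; exists (mkseq c (size s)); split.
    + by rewrite size_mkseq.
    + by apply/allP => x /mapP [i _ ->]; rewrite -hF.
    + by apply: eq_bigr => i _; rewrite nth_mkseq.
  move=> [c [sc ac ->]]; apply/cs; exists (fun i => c`_i); split => //.
  exact: hc.
Qed.

Lemma basisV_ext (L : finFieldType) (sigma : {rmorphism L -> L}) (V : vectType L)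
  (s : seq V) (S S' : V -> Prop) :
  (forall v, S v <-> S' v) -> @basisV L sigma V s S -> @basisV L sigma V s S'.
Proof. by move=> E [fs cs]; split => // v; rewrite -E. Qed.

Section Main.
Variables (L : finFieldType) (q t n : nat) (sigma : {rmorphism L -> L})
  (U1 U2 : {vspace 'rV[L]_(2 * n)}) (f : 'rV[L]_(2 * n) -> 'rV[L]_(2 * n)) (rho : L).
Local Notation V := 'rV[L]_(2 * n).
Hypotheses (n2 : (2 <= n)%N) (t2 : (2 <= t)%N) (HL : #|L| = (q ^ t)%N)
  (sbij : bijective sigma) (Hfix : [set x : L | sigma x == x] = Fq q)
  (dU1 : \dim U1 = n) (dU2 : \dim U2 = n) (dU : directv (U1 + U2)%VS)
  (fullU : (U1 + U2)%VS = fullv)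
  (fD : {in U1 &, forall u v, f (u + v) = f u + f v})
  (fZ : forall (a : L) u, u \in U1 -> f (a *: u) = sigma a *: f u)
  (fU2 : forall u, u \in U1 -> f u \in U2)
  (fI : {in U1 &, injective f})
  (fS : forall w, w \in U2 -> exists2 u, u \in U1 & f u = w)
  (rho0 : rho != 0).

Local Notation inF := (@inF L sigma).

Lemma f0 : f 0 = 0.
Proof. by rewrite -(scale0r 0) fZ ?mem0v // rmorph0 !scale0r. Qed.

Lemma fnz u : u \in U1 -> u != 0 -> f u != 0.
Proof.
move=> uU; apply: contraNneq => fu; apply/eqP; apply: fI => //; first exact: mem0v.
by rewrite fu f0.
Qed.

Lemma dec a1 a2 b1 b2 : a1 \in U1 -> b1 \in U1 -> a2 \in U2 -> b2 \in U2 ->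
  a1 + a2 = b1 + b2 -> a1 = b1 /\ a2 = b2.
Proof. exact: decompV dU. Qed.
Arguments dec {a1 a2 b1 b2}.

Definition phi u := u + rho *: f u.

Lemma phiD : {in U1 &, forall x y, phi (x + y) = phi x + phi y}.
Proof.
move=> x y xU yU; rewrite /phi fD // scalerDr.
by rewrite -!addrA; congr (_ + _); rewrite addrCA.
Qed.

Lemma phiZ c x : inF c -> x \in U1 -> phi (c *: x) = c *: phi x.
Proof.
move=> /eqP Hc xU; rewrite /phi fZ // Hc scalerDr !scalerA mulrC //.
Qed.

Lemma phiI : {in U1 &, injective phi}.
Proof.
move=> x y xU yU E; have [] := dec xU yU _ _ E => //; apply: memvZ; exact: fU2.
Qed.

Lemma memW u : (u \in [set phi x | x in vset U1]) <-> exists2 x, x \in U1 & u = phi x.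
Proof.
split; first by move=> /imsetP [x]; rewrite inE => xU ->; exists x.
by move=> [x xU ->]; apply/imsetP; exists x; rewrite ?inE.
Qed.

Lemma q_gt1 : (1 < q)%N.
Proof.
have c2 : (2 <= #|L|)%N.
  by have := max_card (mem [set (0 : L); 1]); rewrite cards2 eq_sym oner_neq0.
case: q HL c2 => [|[|q']] -> //; first by rewrite exp0n // ltnW.
by rewrite exp1n.
Qed.

Lemma exists_basis_t : exists b, [/\ @freeL L sigma b, forall y, @combL L sigma b y & size b = t].
Proof.
have [b [fb cb]] := @exists_basisL L sigma; exists b; split => //.
have := @card_basisL L sigma b fb cb.
have -> : #|[pred x : L | inF x]| = q.
  rewrite -(@card_fixq L q t HL (ltnW t2) q_gt1).
  rewrite (_ : [set x : L | x ^+ q == x] = [set x | sigma x == x]); last by rewrite Hfix.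
  by apply: eq_card => x; rewrite !inE.
by rewrite HL => /eqP; rewrite eqn_exp2l ?q_gt1 // => /eqP.
Qed.


Definition Wset := [set u + rho *: f u | u in vset U1].

Lemma W_dim : Fq_dim q Wset (t * n)%N.
Proof.
have [b [fb cb sb]] := exists_basis_t.
have bU := vbasisP U1.
have := @basisV_span L sigma _ b (vbasis U1) fb cb (basis_free bU).
rewrite (span_basis bU) => B1.
have B2 := @basisV_image L sigma _ _ U1 phi phiD phiZ phiI B1.
have B3 : @basisV L sigma _ (map phi (flatten [seq [seq c *: x | c <- b] | x <- vbasis U1]))
    (fun v => v \in Wset).
  by apply: basisV_ext B2 => v; rewrite memW.
have := @basisV_Fq_dim L sigma q _ _ _ Hfix B3.
by rewrite size_map size_flat size_tuple sb dU1.
Qed.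


Lemma phi0 : phi 0 = 0.
Proof. by rewrite /phi f0 scaler0 addr0. Qed.

Lemma W_scattered : scattered q Wset.
Proof.
move=> w /memW [u uU ->] w0.
have u0 : u != 0 by apply: contraNneq w0 => ->; rewrite phi0.
have fu0 := fnz u uU u0.
rewrite /weight.
change (Fq_dim q (Wset :&: vset <[phi u]>) (size [:: phi u])).
apply: (@basisV_Fq_dim L sigma q _ _ _ Hfix).
split.
  move=> c Hc; rewrite big_ord1 => /eqP; rewrite scaler_eq0 (negbTE w0) orbF => /eqP H.
  by case.
move=> v; rewrite inE !inE; split.
  move=> /andP [/memW [x xU ->] /vlineP [k E]].
  have [E1 E2] : x = k *: u /\ rho *: f x = k *: (rho *: f u).
    apply: dec => //; first by rewrite memvZ.
    - by rewrite memvZ // fU2.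
    - by rewrite !memvZ // fU2.
    by rewrite -scalerDr; exact: E.
  have Hk : inF k.
    move: E2; rewrite E1 fZ // !scalerA => /eqP; rewrite -subr_eq0 -scalerBl.
    rewrite scaler_eq0 (negbTE fu0) orbF [k * _]mulrC -mulrBr mulf_eq0 (negbTE rho0) /=.
    by rewrite subr_eq0.
  exists (fun _ => k); split => //; by rewrite big_ord1 E.
move=> [c [Hc ->]]; rewrite big_ord1 /=; apply/andP; split.
  by apply/memW; exists (c 0%N *: u); rewrite ?memvZ // phiZ.
by rewrite memvZ // memv_line.
Qed.


Definition sl u := (<[u]> + <[f u]>)%VS.

Lemma cap12 : (U1 :&: U2 = 0)%VS.
Proof. exact/directv_addP. Qed.

Lemma mem12 y : y \in U1 -> y \in U2 -> y = 0.
Proof. by move=> y1 y2; apply/eqP; rewrite -memv0 -cap12 memv_cap y1 y2. Qed.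

Lemma mem_sl u y : reflect (exists a b, y = a *: u + b *: f u) (y \in sl u).
Proof.
apply: (iffP memv_addP).
  by move=> [y1 /vlineP [a ->] [y2 /vlineP [b ->] ->]]; exists a, b.
move=> [a [b ->]]; exists (a *: u); first by rewrite memvZ // memv_line.
by exists (b *: f u); rewrite // memvZ // memv_line.
Qed.

Lemma sl_dim u : u \in U1 -> u != 0 -> \dim (sl u) = 2%N.
Proof.
move=> uU u0; have := dimv_sum_cap <[u]> <[f u]>.
have -> : (<[u]> :&: <[f u]> = 0)%VS.
  apply/eqP; rewrite -subv0; apply/subvP => y /memv_capP [/vlineP [a ->] /vlineP [b E]].
  rewrite memv0; apply/eqP; apply: mem12; first by rewrite memvZ.
  by rewrite E memvZ // fU2.
by rewrite dimv0 addn0 /sl => ->; rewrite !dim_vline u0 fnz.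
Qed.

Lemma sinv : exists g : L -> L, cancel sigma g /\ cancel g sigma.
Proof. by case: sbij => g h1 h2; exists g. Qed.

Lemma indepU u v a b a' b' : u \in U1 -> v \in U1 -> u != 0 -> v \notin <[u]>%VS ->
  a *: u + b *: v = a' *: u + b' *: v -> a = a' /\ b = b'.
Proof.
move=> uU vU u0 vu E.
have E0 : (a - a') *: u + (b - b') *: v = 0.
  by rewrite !scalerBl addrACA -opprD E subrr.
have bb : b - b' = 0.
  apply/eqP; apply: contraNT vu => bb; apply/vlineP; exists (- ((a - a') / (b - b'))).
  apply: (scalerI bb); rewrite scalerA mulrN [(b - b') * _]mulrC divfK // scaleNr.
  by apply/eqP; rewrite -addr_eq0 addrC E0.
move: E0; rewrite bb scale0r addr0 => /eqP; rewrite scaler_eq0 (negbTE u0) orbF.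
by move/eqP => /subr0_eq ->; move/subr0_eq: bb ->.
Qed.
Arguments indepU {u v a b a' b'}.

Lemma indepF u v a b a' b' : u \in U1 -> v \in U1 -> u != 0 -> v \notin <[u]>%VS ->
  a *: f u + b *: f v = a' *: f u + b' *: f v -> a = a' /\ b = b'.
Proof.
move=> uU vU u0 vu E; have [g [gK Kg]] := sinv.
have E' : f (g a *: u + g b *: v) = f (g a' *: u + g b' *: v).
  by rewrite !fD ?memvZ // !fZ // !Kg.
have hm : forall x y, x *: u + y *: v \in U1.
  by move=> x y; apply: memvD; apply: memvZ.
have := fI _ _ (hm _ _) (hm _ _) E' => /(indepU uU vU u0 vu) [h1 h2].
by rewrite -[a]Kg -[a']Kg -[b]Kg -[b']Kg h1 h2.
Qed.
Arguments indepF {u v a b a' b'}.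

Lemma sl_cap u v : u \in U1 -> v \in U1 -> u != 0 -> v \notin <[u]>%VS ->
  (sl u :&: sl v = 0)%VS.
Proof.
move=> uU vU u0 vu; apply/eqP; rewrite -subv0; apply/subvP => y.
move=> /memv_capP [/mem_sl [a [b ->]] /mem_sl [c [d E]]].
have [E1 E2] := dec (memvZ a uU) (memvZ c vU) (memvZ b (fU2 _ uU)) (memvZ d (fU2 _ vU)) E.
have v0 : v != 0 by apply: contraNneq vu => ->; rewrite mem0v.
have H1 : a *: u + 0 *: v = 0 *: u + c *: v by rewrite scale0r addr0 scale0r add0r.
have H2 : b *: f u + 0 *: f v = 0 *: f u + d *: f v by rewrite scale0r addr0 scale0r add0r.
have [-> _] := indepU uU vU u0 vu H1; have [-> _] := indepF uU vU u0 vu H2.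
by rewrite !scale0r addr0 memv0.
Qed.


Lemma exists_nfix : exists k, sigma k != k.
Proof.
apply: NNPP => H.
have E : [set x : L | sigma x == x] = setT.
  apply/setP => x; rewrite !inE; apply: NNPP => Hx; apply: H; exists x.
  by apply/negP => Hx'; apply: Hx; rewrite Hx'.
have := @card_fixq L q t HL (ltnW t2) q_gt1.
rewrite (_ : [set x : L | x ^+ q == x] = [set x | sigma x == x]); last by rewrite Hfix.
rewrite E cardsT HL => /eqP; rewrite -{2}(expn1 q) eqn_exp2l ?q_gt1 //.
by move/eqP => t1; move: t2; rewrite t1.
Qed.

Lemma other u : exists2 v, v \in U1 & v \notin <[u]>%VS.
Proof.
apply/subvPn; apply/negP => H; have := dimvS H; rewrite dim_vline dU1 => H2.
by have := leq_trans n2 (leq_trans H2 (leq_b1 _)).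
Qed.

Lemma nzw u v k : u \in U1 -> v \in U1 -> u != 0 -> v \notin <[u]>%VS -> u + k *: v != 0.
Proof.
move=> uU vU u0 vu; apply/eqP => E.
have : 1 *: u + k *: v = 0 *: u + 0 *: v by rewrite scale1r E !scale0r addr0.
by move/(indepU uU vU u0 vu) => [/eqP]; rewrite oner_eq0.
Qed.

Section TChar.
Variable T : {vspace V}.
Hypothesis dT : \dim T = n.
Hypothesis HT : forall u, u \in U1 -> u != 0 -> (T :&: sl u)%VS != 0%VS.

Lemma ptT u : u \in U1 -> u != 0 ->
  exists a b, a *: u + b *: f u \in T /\ a *: u + b *: f u != 0.
Proof.
move=> uU u0; have := HT _ uU u0; rewrite -vpick0 => Hn.
have /memv_capP [yT /mem_sl [a [b E]]] := memv_pick (T :&: sl u)%VS.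
by exists a, b; rewrite -E.
Qed.

Lemma case1 : (T :&: U2 = 0)%VS -> T = U1.
Proof.
move=> T2.
have uniq2 : forall x y y', x + y \in T -> x + y' \in T -> y \in U2 -> y' \in U2 -> y = y'.
  move=> x y y' h1 h2 y2 y2'; apply/eqP; rewrite -subr_eq0 -memv0 -T2 memv_cap.
  apply/andP; split; last exact: memvB.
  have -> : y - y' = (x + y) - (x + y') by rewrite opprD addrACA subrr add0r.
  exact: memvB.
have cu : forall u, u \in U1 -> u != 0 -> exists c, u + c *: f u \in T.
  move=> u uU u0; have [a [b [abT ab0]]] := ptT _ uU u0.
  have [a0|a0] := eqVneq a 0.
    exfalso; move: ab0; rewrite a0 scale0r add0r => /negP; apply.
    by rewrite -memv0 -T2 memv_cap -{1}(add0r (b *: f u)) -(scale0r u) -a0 abT memvZ // fU2.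
  exists (a^-1 * b); have := memvZ a^-1 abT.
  by rewrite scalerDr !scalerA mulVf // scale1r.
have key : forall u, u \in U1 -> u != 0 -> u \in T.
  move=> u uU u0; have [v vU vu] := other u.
  have [cu0 Hu] := cu u uU u0.
  have v0 : v != 0 by apply: contraNneq vu => ->; rewrite mem0v.
  have [cv0 Hv] := cu v vU v0.
  have rel : forall k, k * cv0 = cu0 * sigma k.
    move=> k; have wU : u + k *: v \in U1 by rewrite memvD // memvZ.
    have [cw Hw] := cu _ wU (nzw _ _ k uU vU u0 vu).
    have H1 : (u + k *: v) + (cu0 *: f u + (k * cv0) *: f v) \in T.
      have := memvD Hu (memvZ k Hv).
      by rewrite scalerDr scalerA addrACA.
    have H2 : (u + k *: v) + (cw *: f u + (cw * sigma k) *: f v) \in T.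
      by move: Hw; rewrite fD ?memvZ // fZ // scalerDr scalerA.
    have := uniq2 _ _ _ H1 H2.
    rewrite !memvD ?memvZ ?fU2 // => /(_ isT isT) /(indepF uU vU u0 vu) [<- ->] //.
  have [k0 Hk0] := exists_nfix.
  have := rel 1; rewrite mul1r rmorph1 mulr1 => Ecv.
  have := rel k0; rewrite Ecv => /eqP; rewrite mulrC -subr_eq0 -mulrBr mulf_eq0.
  rewrite subr_eq0 [k0 == _]eq_sym (negbTE Hk0) orbF => /eqP c0.
  by move: Hu; rewrite c0 scale0r addr0.
apply/eqP; rewrite eq_sym eqEdim dT dU1 leqnn andbT; apply/subvP => u uU.
have [->|u0] := eqVneq u 0; first exact: mem0v.
exact: key.
Qed.


Lemma case2 : (T :&: U1 = 0)%VS -> T = U2.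
Proof.
move=> T1.
have uniq1 : forall x x' y, x + y \in T -> x' + y \in T -> x \in U1 -> x' \in U1 -> x = x'.
  move=> x x' y h1 h2 x1 x1'; apply/eqP; rewrite -subr_eq0 -memv0 -T1 memv_cap.
  apply/andP; split; last exact: memvB.
  have -> : x - x' = (x + y) - (x' + y) by rewrite opprD addrACA subrr addr0.
  exact: memvB.
have du : forall u, u \in U1 -> u != 0 -> exists d, d *: u + f u \in T.
  move=> u uU u0; have [a [b [abT ab0]]] := ptT _ uU u0.
  have [b0|b0] := eqVneq b 0.
    exfalso; move: ab0; rewrite b0 scale0r addr0 => /negP; apply.
    rewrite -memv0 -T1 memv_cap; apply/andP; split; last exact: memvZ.
    by move: abT; rewrite b0 scale0r addr0.
  exists (b^-1 * a); have := memvZ b^-1 abT.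
  by rewrite scalerDr !scalerA mulVf // scale1r.
have key : forall u, u \in U1 -> u != 0 -> f u \in T.
  move=> u uU u0; have [v vU vu] := other u.
  have [du0 Hu] := du u uU u0.
  have v0 : v != 0 by apply: contraNneq vu => ->; rewrite mem0v.
  have [dv0 Hv] := du v vU v0.
  have rel : forall k, sigma k * dv0 = du0 * k.
    move=> k; have wU : u + k *: v \in U1 by rewrite memvD // memvZ.
    have [dw Hw] := du _ wU (nzw _ _ k uU vU u0 vu).
    have H1 : (du0 *: u + (sigma k * dv0) *: v) + (f u + sigma k *: f v) \in T.
      have := memvD Hu (memvZ (sigma k) Hv).
      by rewrite scalerDr scalerA addrACA.
    have H2 : (dw *: u + (dw * k) *: v) + (f u + sigma k *: f v) \in T.
      by move: Hw; rewrite fD ?memvZ // fZ // scalerDr scalerA.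
    have := uniq1 _ _ _ H1 H2.
    rewrite !memvD ?memvZ // => /(_ isT isT) /(indepU uU vU u0 vu) [<- ->] //.
  have [k0 Hk0] := exists_nfix.
  have := rel 1; rewrite mulr1 rmorph1 mul1r => Edv.
  have := rel k0; rewrite Edv => /eqP; rewrite mulrC -subr_eq0 -mulrBr mulf_eq0.
  rewrite subr_eq0 (negbTE Hk0) orbF => /eqP d0.
  by move: Hu; rewrite d0 scale0r add0r.
apply/eqP; rewrite eq_sym eqEdim dT dU2 leqnn andbT; apply/subvP => w wU.
have [u uU <-] := fS _ wU.
have [->|u0] := eqVneq u 0; first by rewrite f0 mem0v.
exact: key.
Qed.

Lemma dim12 : \dim (U1 + U2) = (2 * n)%N.
Proof.
have := dimv_sum_cap U1 U2; rewrite cap12 dimv0 addn0 dU1 dU2 => ->.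
by rewrite mul2n addnn.
Qed.

Lemma case3 : (T :&: U1 != 0)%VS -> (T :&: U2 != 0)%VS -> False.
Proof.
move=> T1 T2.
have [u1 u1U u1n] : exists2 u1, u1 \in U1 & u1 \notin (T + U2)%VS.
  apply/subvPn/negP => H.
  have : (U1 + U2 <= T + U2)%VS by rewrite subv_add H addvSr.
  move/dimvS; rewrite dim12 => H1.
  have E := dimv_sum_cap T U2; rewrite dT dU2 in E.
  have Hp : (0 < \dim (T :&: U2))%N by rewrite lt0n dimv_eq0.
  move: H1 E Hp. rewrite -[X in (X + _)%N = _]/(\dim (T + U2)%VS). set a := \dim (T + U2)%VS; set c := \dim (T :&: U2)%VS. move=> H1 E Hp; move: H1; rewrite mul2n -addnn -E -{2}[a]addn0 leq_add2l leqn0 => /eqP c0; by rewrite c0 in Hp.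
have [u2 u2U u2n] : exists2 u2, u2 \in U1 & f u2 \notin T.
  apply: NNPP => H; apply/negP: T1; rewrite negbK.
  have TU : T = U2.
    apply/eqP; rewrite eq_sym eqEdim dT dU2 leqnn andbT; apply/subvP => w wU.
    have [u uU <-] := fS _ wU; apply: NNPP => H'; apply: H; by exists u => //; apply/negP.
  by rewrite TU capvC cap12.
have alt : forall u, u \in U1 -> u \in (T + U2)%VS \/ f u \in T.
  move=> u uU; have [->|u0] := eqVneq u 0; first by left; rewrite mem0v.
  have [a [b [abT ab0]]] := ptT _ uU u0.
  have [a0|a0] := eqVneq a 0.
    right; move: ab0 abT; rewrite a0 scale0r add0r => b0.
    have bn : b != 0 by apply: contraNneq b0 => ->; rewrite scale0r.
    by move/(memvZ b^-1); rewrite scalerA mulVf // scale1r.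
  left; have -> : u = a^-1 *: (a *: u + b *: f u) + (- (a^-1 * b)) *: f u.
    by rewrite scalerDr !scalerA mulVf // scale1r scaleNr addrK.
  by apply: memv_add; [rewrite memvZ | rewrite memvZ // fU2].
have fu1 : f u1 \in T by case: (alt _ u1U) => // H; rewrite H in u1n.
have u2T : u2 \in (T + U2)%VS by case: (alt _ u2U) => // H; rewrite H in u2n.
have sU : u1 + u2 \in U1 by rewrite memvD.
case: (alt _ sU) => H.
  by move/negP: u1n; apply; have := memvB H u2T; rewrite addrK.
by move/negP: u2n; apply; have := memvB H fu1; rewrite fD // [f u1 + _]addrC addrK.
Qed.

Lemma T_char : T = U1 \/ T = U2.
Proof.
have [T2|T2] := eqVneq (T :&: U2)%VS 0%VS; first by left; exact: case1.
have [T1|T1] := eqVneq (T :&: U1)%VS 0%VS; first by right; exact: case2.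
by exfalso; exact: case3.
Qed.

End TChar.


Definition D := vset U1 :\ 0.
Definition blk x := [set y in D | <[x]>%VS == <[y]>%VS].
Definition P := [set blk x | x in D].

Lemma P_eq : P = preim_partition (fun v : V => <[v]>%VS) D.
Proof. by []. Qed.

Lemma inD x : (x \in D) = (x \in U1) && (x != 0).
Proof. by rewrite !inE andbC. Qed.

Lemma vline_scale (k : L) (x : V) : k != 0 -> <[k *: x]>%VS = <[x]>%VS.
Proof.
move=> k0; apply/eqP; rewrite eqEdim !dim_vline scaler_eq0 (negbTE k0) /= leqnn andbT.
by rewrite -memvE memvZ // memv_line.
Qed.

Lemma line_eqP (x y : V) : x != 0 -> y != 0 ->
  reflect (exists2 k, k != 0 & y = k *: x) (<[x]>%VS == <[y]>%VS).
Proof.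
move=> x0 y0; apply: (iffP eqP) => [E | [k k0 ->]]; last by rewrite vline_scale.
have : y \in <[x]>%VS by rewrite E memv_line.
move/vlineP => [k Ey]; exists k => //; apply: contraNneq y0 => k0.
by rewrite Ey k0 scale0r.
Qed.

Lemma blk_self (x : V) : x \in D -> x \in blk x.
Proof. by move=> xD; rewrite inE xD eqxx. Qed.

Lemma blk_mem (A : {set V}) (y : V) : A \in P -> y \in A -> A = blk y.
Proof.
move=> /imsetP [x xD ->]; rewrite inE => /andP [yD /eqP E].
by apply/setP => z; rewrite !inE E.
Qed.

Lemma card_blk (x : V) : x \in D -> #|blk x| = #|L|.-1.
Proof.
move=> xD; move: (xD); rewrite inD => /andP [xU x0].
have inj : injective (fun k : L => k *: x).
  move=> a b /eqP; rewrite -subr_eq0 -scalerBl scaler_eq0 (negbTE x0) orbF subr_eq0.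
  by move/eqP.
rewrite -(cardsC1 (0 : L)) -(card_imset _ inj); apply: eq_card => y.
rewrite inE; apply/andP/imsetP.
  move=> [yD /(line_eqP _ _ x0 _) H]; move: (yD); rewrite inD => /andP [_ y0].
  have [k k0 ->] := H y0; by exists k; rewrite ?inE.
move=> [k]; rewrite !inE => k0 ->.
have kx0 : k *: x != 0 by rewrite scaler_eq0 (negbTE k0) (negbTE x0).
split; first by rewrite kx0; exact: memvZ.
by apply/line_eqP => //; exists k.
Qed.

Lemma card_D : #|D| = (#|P| * #|L|.-1)%N.
Proof.
apply: card_uniform_partition; last by rewrite P_eq; apply: preim_partitionP.
by move=> A /imsetP [x xD ->]; apply: card_blk.
Qed.

Lemma EP : pr_size q t n = #|P|.
Proof.
have cD : #|D| = (#|L| ^ n).-1.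
  have E := cardsD1 (0 : V) (vset U1).
  rewrite inE mem0v add1n /vset cardsE (card_vspace U1) dU1 in E.
  by rewrite E.
rewrite /pr_size mulnC expnM -HL !subn1 -cD card_D mulnK //.
by rewrite -subn1 subn_gt0; have := max_card (mem [set (0 : L); 1]); rewrite cards2 eq_sym oner_neq0.
Qed.


Definition Ai (i : 'I_(pr_size q t n)) := enum_val (cast_ord EP i).
Definition rep (A : {set V}) : V := odflt 0 [pick x in A].
Definition ri i := rep (Ai i).
Definition sfun i := sl (ri i).

Lemma rep_mem (A : {set V}) x : x \in A -> rep A \in A.
Proof. by rewrite /rep; case: pickP => [y /= ->|/(_ x) /= ->]. Qed.

Lemma Ai_P i : Ai i \in P.
Proof. exact: enum_valP. Qed.

Lemma ri_D i : ri i \in D.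
Proof.
have := Ai_P i => /imsetP [x xD E].
have : ri i \in Ai i by rewrite /ri; apply: (@rep_mem _ x); rewrite E blk_self.
by rewrite E inE => /andP [].
Qed.

Lemma ri_U i : ri i \in U1.
Proof. by have := ri_D i; rewrite inD => /andP []. Qed.

Lemma ri_0 i : ri i != 0.
Proof. by have := ri_D i; rewrite inD => /andP []. Qed.

Lemma Ai_blk i : Ai i = blk (ri i).
Proof.
apply: blk_mem; first exact: Ai_P.
have := Ai_P i => /imsetP [x xD E]; rewrite /ri E; apply: (@rep_mem _ x); exact: blk_self.
Qed.

Lemma same i j : ri i \in <[ri j]>%VS -> i = j.
Proof.
move=> /vlineP [k E].
have k0 : k != 0 by apply: contraNneq (ri_0 i) => k0; rewrite E k0 scale0r.
have Eb : blk (ri i) = blk (ri j) by rewrite /blk E vline_scale.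
by move: Eb; rewrite -!Ai_blk => /enum_val_inj /cast_ord_inj.
Qed.

Lemma sl_scale u k : u \in U1 -> k != 0 -> sl (k *: u) = sl u.
Proof. by move=> uU k0; rewrite /sl fZ // !vline_scale // fmorph_eq0. Qed.

Lemma sfun_inj : injective sfun.
Proof.
move=> i j E; apply: same.
have : ri i \in sfun j.
  by rewrite -E; apply/mem_sl; exists 1, 0; rewrite scale1r scale0r addr0.
move/mem_sl => [a [b Eab]].
have [E1 _] := dec (ri_U i) (memvZ a (ri_U j)) (mem0v U2) (memvZ b (fU2 _ (ri_U j)))
  (etrans (addr0 _) Eab).
by rewrite E1; apply: memvZ; exact: memv_line.
Qed.


Lemma sfun_img l : (exists i, sfun i = l) <-> (exists2 u, u \in U1 & u != 0 /\ l = sl u).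
Proof.
split; first by move=> [i <-]; exists (ri i); [exact: ri_U | split; [exact: ri_0 |]].
move=> [u uU [u0 ->]].
have uD : u \in D by rewrite inD uU u0.
have AP : blk u \in P by apply: imset_f.
pose i := cast_ord (esym EP) (enum_rank_in AP (blk u)).
exists i.
have Ai_eq : Ai i = blk u by rewrite /Ai /i cast_ordKV enum_rankK_in.
have : ri i \in blk u by rewrite /ri Ai_eq; apply: (@rep_mem _ u); exact: blk_self.
rewrite inE => /andP [_ /(line_eqP _ _ u0 (ri_0 i)) [k k0 Ek]].
by rewrite /sfun Ek sl_scale.
Qed.


Lemma weight_sl u : u \in U1 -> u != 0 -> weight q Wset (sl u) t.
Proof.
move=> uU u0; have [b [fb cb sb]] := exists_basis_t.
have B1 := @basisV_line L sigma _ b u fb cb u0.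
have sub : forall x, x \in <[u]>%VS -> x \in U1.
  by apply/subvP; rewrite -memvE.
have pD : {in <[u]>%VS &, forall x y, phi (x + y) = phi x + phi y}.
  by move=> x y hx hy; apply: phiD; apply: sub.
have pZ : forall c x, inF c -> x \in <[u]>%VS -> phi (c *: x) = c *: phi x.
  by move=> c x hc hx; apply: phiZ => //; apply: sub.
have pI : {in <[u]>%VS &, injective phi}.
  by move=> x y hx hy; apply: phiI; apply: sub.
have B2 := @basisV_image L sigma _ _ _ phi pD pZ pI B1.
have B3 : @basisV L sigma _ (map phi [seq c *: u | c <- b])
    (fun v => v \in Wset :&: vset (sl u)).
  apply: basisV_ext B2 => y; rewrite inE; split.
    move=> [x /vlineP [k ->] ->]; apply/andP; split.
      by apply/memW; exists (k *: u); rewrite ?memvZ.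
    rewrite inE; apply/mem_sl; exists k, (rho * sigma k).
    by rewrite /phi fZ // scalerA.
  move=> /andP [/memW [x xU ->]]; rewrite inE => /mem_sl [a [c E]].
  have [E1 _] := dec xU (memvZ a uU) (memvZ rho (fU2 _ xU)) (memvZ c (fU2 _ uU)) E.
  by exists x => //; rewrite E1 memvZ // memv_line.
have := @basisV_Fq_dim L sigma q _ _ _ Hfix B3.
by rewrite !size_map sb.
Qed.


Lemma nz_cap (A B : {vspace V}) y : y \in A -> y \in B -> y != 0 -> (A :&: B)%VS != 0%VS.
Proof.
move=> yA yB y0; apply/eqP => E; move/negP: y0; apply.
by rewrite -memv0 -E memv_cap yA yB.
Qed.

Lemma psr : is_pseudoregulus q t n Wset sfun U1 U2.
Proof.
split.
- by move=> i; apply: sl_dim; [exact: ri_U | exact: ri_0].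
- move=> i j ij; apply: sl_cap; [exact: ri_U | exact: ri_U | exact: ri_0 |].
  by apply/negP => /same ji; rewrite ji eqxx in ij.
- by move=> i; apply: weight_sl; [exact: ri_U | exact: ri_0].
- apply/eqP => E; have := cap12; rewrite E capvv => H.
  by move: n2; rewrite -dU2 H dimv0.
move=> T; split.
  move=> [dT [_ Hm]]; apply: (T_char T dT) => u uU u0.
  have [i Ei] := (sfun_img (sl u)).2 (ex_intro2 _ _ u uU (conj u0 erefl)).
  by rewrite -Ei; apply: Hm.
have dis1 : disjoint_from_LU Wset U1.
  move=> w /memW [x xU ->] w0; apply/negP; rewrite -memvE => H.
  have : rho *: f x \in U1 by have := memvB H xU; rewrite /phi addrAC subrr add0r.
  move/mem12 => /(_ (memvZ rho (fU2 _ xU))) /eqP; rewrite scaler_eq0 (negbTE rho0) /=.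
  have [xe|x0] := eqVneq x 0; first by move: w0; rewrite xe phi0 eqxx.
  by rewrite (negbTE (fnz _ xU x0)).
have dis2 : disjoint_from_LU Wset U2.
  move=> w /memW [x xU ->] w0; apply/negP; rewrite -memvE => H.
  have : x \in U2.
    by have := memvB H (memvZ rho (fU2 _ xU)); rewrite /phi addrK.
  move/(mem12 _ xU) => x0; by move: w0; rewrite x0 phi0 eqxx.
move=> [->|->].
  split; [exact: dU1 | split; [exact: dis1 |]] => i.
  apply: (nz_cap _ _ _ (ri_U i)); last exact: ri_0.
  by apply/mem_sl; exists 1, 0; rewrite scale1r scale0r addr0.
split; [exact: dU2 | split; [exact: dis2 |]] => i.
apply: (nz_cap _ _ _ (fU2 _ (ri_U i))); last exact: fnz _ (ri_U i) (ri_0 i).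
by apply/mem_sl; exists 0, 1; rewrite scale1r scale0r add0r.
Qed.


Lemma main_result :
  let W := [set u + rho *: f u | u in vset U1] in
  [/\ Fq_dim q W (t * n)%N,
      pseudoregulus_type q t n W &
      exists s : 'I_(pr_size q t n) -> {vspace V},
        [/\ injective s,
            forall l, (exists i, s i = l) <->
              (exists2 u, u \in U1 & u != 0 /\ l = (<[u]> + <[f u]>)%VS) &
            is_pseudoregulus q t n W s U1 U2]].
Proof.
move=> W; split.
- exact: W_dim.
- split; [exact: W_dim | exact: W_scattered |].
  by exists sfun, U1, U2; exact: psr.
exists sfun; split; [exact: sfun_inj | exact: sfun_img | exact: psr].
Qed.

End Main.

Theorem theorem3p5 (L : finFieldType) (q t n : nat)
    (sigma : {rmorphism L -> L})
    (U1 U2 : {vspace 'rV[L]_(2 * n)})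
    (f : 'rV[L]_(2 * n) -> 'rV[L]_(2 * n)) (rho : L) :
  (2 <= n)%N -> (2 <= t)%N ->
  #|L| = (q ^ t)%N ->
  bijective sigma ->
  [set x : L | sigma x == x] = Fq q ->
  \dim U1 = n -> \dim U2 = n -> directv (U1 + U2)%VS -> (U1 + U2)%VS = fullv ->
  {in U1 &, forall u v, f (u + v) = f u + f v} ->
  (forall (a : L) u, u \in U1 -> f (a *: u) = sigma a *: f u) ->
  (forall u, u \in U1 -> f u \in U2) ->
  {in U1 &, injective f} ->
  (forall w, w \in U2 -> exists2 u, u \in U1 & f u = w) ->
  rho != 0 ->
  let W := [set u + rho *: f u | u in vset U1] in
  [/\ Fq_dim q W (t * n)%N,
      pseudoregulus_type q t n W &
      exists s : 'I_(pr_size q t n) -> {vspace 'rV[L]_(2 * n)},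
        [/\ injective s,
            forall l, (exists i, s i = l) <->
              (exists2 u, u \in U1 & u != 0 /\ l = (<[u]> + <[f u]>)%VS) &
            is_pseudoregulus q t n W s U1 U2]].
Proof.
move=> n2 t2 HL sbij Hfix dU1 dU2 dU fullU fD fZ fU2 fI fS rho0.
exact: (@main_result L q t n sigma U1 U2 f rho n2 t2 HL sbij Hfix dU1 dU2 dU fD fZ fU2 fI fS rho0).
Qed.
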